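(* Let $n$ be a positive odd integer and let $G$ be a finite group. Then $P_e(G)\cong P_e(Q_8\times\mathbb{Z}_n)$ if and only if $G\cong Q_8\times\mathbb{Z}_n$.
   Context: All groups are finite. $Q_8$ is the quaternion group of order $8$ and $\mathbb{Z}_n$ the cyclic group of order $n$. For a group $X$, the enhanced power graph $P_e(X)$ is the simple graph with vertex set $X$ in which two distinct vertices $x,y$ are adjacent if and only if $\langle x,y\rangle$ is cyclic. *)

(* Defs.v *)
From HB Require Import structures.
From mathcomp Require Import all_boot all_order all_algebra all_fingroup all_solvable.
Set Implicit Arguments. Unset Strict Implicit. Unset Printing Implicit Defensive.
Import GroupScope.

Definition epg_adj (gT : finGroupType) (x y : gT) : bool :=
  (x != y) && cyclic <<[set x; y]>>.

Definition epg_iso (gT hT : finGroupType) (G : {set gT}) (H : {set hT}) : Prop :=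
  exists f : gT -> hT,
    [/\ {in G &, injective f}, f @: G = H &
        {in G &, forall x y, epg_adj (f x) (f y) = epg_adj x y}].

(* Q_8 x Z_n as an external direct product; Zp n is the cyclic group of order n
   (for n >= 1). *)
Definition Q8xZ (n : nat) : {group (gsort 'Q_8 * 'Z_n)%type} :=
  setX_group 'Q_8%G (Zp_group n).

(* Main.v *)
Require Import Defs.
From mathcomp Require Import all_boot all_order all_algebra all_fingroup all_solvable.

Set Implicit Arguments. Unset Strict Implicit. Unset Printing Implicit Defensive.
Import GroupScope.
Definition cyc2 (gT : finGroupType) (a b : gT) := cyclic <<[set a; b]>>.
Definition nb (gT : finGroupType) (A : {set gT}) (a : gT) := [set b in A | cyc2 a b].

Lemma cyc2_refl (gT : finGroupType) (a : gT) : cyc2 a a.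
Proof. by rewrite /cyc2 setUid cycle_cyclic. Qed.

Lemma cyc2_sym (gT : finGroupType) (a b : gT) : cyc2 a b = cyc2 b a.
Proof. by rewrite /cyc2 setUC. Qed.

Lemma cyc2_sub (gT : finGroupType) (a b : gT) (C : {group gT}) :
  cyclic C -> a \in C -> b \in C -> cyc2 a b.
Proof.
move=> cC aC bC; apply: cyclicS cC.
by rewrite gen_subG subUset !sub1set aC bC.
Qed.

Lemma clique_cyclic (gT : finGroupType) (G : {group gT}) (S : {set gT}) (z : gT) :
  S \subset G -> {in S &, forall a b, cyc2 a b} -> z \in G -> nb G z \subset S ->
  exists c, c \in G /\ <[c]> = S.
Proof.
move=> sSG clS zG nbS.
have nbP : forall e, e \in G -> cyc2 z e -> e \in S.
  by move=> e eG ze; apply: (subsetP nbS); rewrite inE eG ze.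
pose P c := (c \in S) && (z \in <[c]>) && (<[c]> \subset S).
have Pz : P z.
  have zS : z \in S by apply: nbP => //; exact: cyc2_refl.
  rewrite /P zS cycle_id /=; apply/subsetP => e ez.
  apply: nbP; first by move: ez; apply/subsetP; rewrite cycle_subG.
  exact: (cyc2_sub (cycle_cyclic z) (cycle_id z) ez).
case: (@arg_maxnP _ z P (fun c => #[c]) Pz) => c /andP[/andP[cS zc] scS] maxc.
exists c; split; first exact: (subsetP sSG).
apply/eqP; rewrite eqEsubset scS /=; apply/subsetP => y yS.
have /cyclicP[h defh] := clS c y cS yS.
have ch : c \in <[h]> by rewrite -defh mem_gen // !inE eqxx.
have yh : y \in <[h]> by rewrite -defh mem_gen // !inE eqxx orbT.
have hG : h \in G.
  have : <<[set c; y]>> \subset G.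
    by rewrite gen_subG subUset !sub1set (subsetP sSG) // (subsetP sSG).
  by rewrite defh cycle_subG.
have shS : <[h]> \subset S.
  apply/subsetP => e eh; apply: nbP.
    by move: eh; apply/subsetP; rewrite cycle_subG.
  apply: (cyc2_sub (cycle_cyclic h)) eh.
  by move: zc; apply/subsetP; rewrite cycle_subG.
have Ph : P h.
  rewrite /P shS andbT (subsetP shS) ?cycle_id //=.
  by move: zc; apply/subsetP; rewrite cycle_subG.
have := maxc h Ph => le_hc.
have sch : <[c]> \subset <[h]> by rewrite cycle_subG.
have : <[c]> = <[h]>.
  by apply/eqP; rewrite eqEcard sch -!orderE.
by move=> ->.
Qed.

Lemma G_side (gT : finGroupType) (G : {group gT}) (n : nat) (D : {set gT}) :
  0 < n -> odd n -> #|G| = (8 * n)%N -> #|D| = (2 * n)%N ->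
  (forall g, g \in G -> g \notin D ->
     [/\ {in nb G g &, forall a b, cyc2 a b}, #|nb G g| = (4 * n)%N
       & D \subset nb G g]) ->
  (exists g1 g2, [/\ g1 \in G, g1 \notin D, g2 \in G, g2 \notin D
                   & nb G g1 :&: nb G g2 = D]) ->
  G \isog Q8xZ n.
Proof.
move=> n_gt0 odd_n oG oD Hnb [g1 [g2 [g1G g1D g2G g2D defD]]].
have nbG : forall g, nb G g \subset G.
  by move=> g; apply/subsetP => a; rewrite inE => /andP[].
have cyc_nb : forall g, g \in G -> g \notin D -> exists c,
    [/\ c \in G, <[c]> = nb G g, #[c] = (4 * n)%N & D \subset <[c]>].
  move=> g gG gD; have [cl cn sD] := Hnb g gG gD.
  have [c [cG defc]] := clique_cyclic (nbG g) cl gG (subxx _).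
  by exists c; rewrite orderE defc.
have [c1 [c1G def1 o1 sD1]] := cyc_nb g1 g1G g1D.
have [c2 [c2G def2 o2 sD2]] := cyc_nb g2 g2G g2D.
have eqD : D = <[c1]> :&: <[c2]> by rewrite def1 def2 defD.
have cD : cyclic (<[c1]> :&: <[c2]>) by apply: cyclicS (cycle_cyclic c1); apply: subsetIl.
have [d defd] := cyclicP cD.
have {}eqD : D = <[d]> by rewrite eqD defd.
clear defD; subst D.
have cover : forall a, a \in G -> exists c,
    [/\ a \in <[c]>, #[c] = (4 * n)%N & <[d]> \subset <[c]>].
  move=> a aG; case: (boolP (a \in <[d]>)) => aD.
    by exists c1; split => //; apply: (subsetP sD1).
  have [c [_ defc oc sDc]] := cyc_nb a aG aD.
  by exists c; split => //; rewrite defc inE aG cyc2_refl.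
have sDG : <[d]> \subset G by apply: subset_trans sD1 _; rewrite cycle_subG.
have od : #[d] = (2 * n)%N by rewrite orderE.
pose t := d ^+ n.
have ot : #[t] = 2 by rewrite /t orderXdiv od ?dvdn_mull // mulnK.
have uniq_t : forall u, u \in G -> #[u] = 2 -> u = t.
  move=> u uG ou; have [c [uc _ sDc]] := cover u uG.
  have sut : <[u]> = <[t]>.
    apply/eqP; rewrite (eq_subG_cyclic (cycle_cyclic c)) ?cycle_subG //.
      by rewrite -!orderE ou ot.
    by apply: (subsetP sDc); rewrite mem_cycle.
  have : u \in <[t]> by rewrite -sut cycle_id.
  rewrite cycle2g // !inE => /orP[/eqP u1|/eqP //].
  by move: ou; rewrite u1 order1.
pose N := <[d ^+ 2]>.
have oN : #|N| = n by rewrite /N -orderE orderXdiv od ?dvdn_mulr // mulKn.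
have sND : N \subset <[d]> by apply: cycleX.
have sNG : N \subset G by apply: subset_trans sND sDG.
have cNG : N \subset 'C(G).
  rewrite centsC; apply/subsetP => a aG.
  have [c [ac _ sDc]] := cover a aG.
  have : a \in 'C(<[c]>) by apply: (subsetP (cycle_abelian c)).
  by apply/subsetP/centS/(subset_trans sND).
have [P sylP] := Sylow_exists 2 G.
have co8 : coprime 8 n.
  by rewrite (_ : 8 = 2 ^ 3)%N // coprimeXl // coprime_sym coprimen2.
have oP : #|P| = 8.
  rewrite (card_Hall sylP) oG partnM // part_pnat_id // part_p'nat //.
  by rewrite p'natE // dvdn2 odd_n.
have sPG : P \subset G by apply: pHall_sub sylP.
have tiPN : P :&: N = 1 by apply: coprime_TIg; rewrite oP oN.
have cPN : N \subset 'C(P) by apply: subset_trans cNG (centS sPG).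
have defG : P \x N = G.
  rewrite dprodE //; apply/eqP; rewrite eqEcard mul_subG //=.
  by rewrite TI_cardMg // oP oN oG.
have pP : 2.-group P by apply: pHall_pgroup sylP.
have ntP : P :!=: 1 by rewrite trivg_card1 oP.
have oO : #|'Ohm_1(P)| = 2.
  have sOt : 'Ohm_1(P) \subset <[t]>.
    rewrite (OhmE 1 pP) gen_subG; apply/subsetP => x /LdivP[xP x2].
    have xG : x \in G by apply: (subsetP sPG).
    have : #[x] %| 2 by rewrite order_dvdn x2.
    have := order_gt0 x; case ox: #[x] => [|[|[|k]]] // _ _.
      by move/eqP: ox; rewrite order_eq1 => /eqP ->; apply: group1.
    by rewrite (uniq_t x xG ox) cycle_id.
  have := cardSg sOt; rewrite -orderE ot.
  have := cardG_gt0 'Ohm_1(P).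
  have : 'Ohm_1(P) != 1 :> {set _} by rewrite Ohm1_eq1.
  rewrite trivg_card1; case: #|_| => [|[|[|k]]] //.
have ncP : ~~ cyclic P.
  apply/negP => /cyclicP[p defP].
  have op : #[p] = 8 by rewrite orderE -defP.
  have pG : p \in G by apply: (subsetP sPG); rewrite defP cycle_id.
  have [c [pc oc _]] := cover p pG.
  have := order_dvdG pc; rewrite -orderE op oc (_ : 8 = 4 * 2)%N //.
  by rewrite dvdn_pmul2l // dvdn2 odd_n.
move: oO => /(prime_Ohm1P pP ntP); rewrite (negbTE ncP) /=.
move/eqP/quaternion_classP => [m m_gt2 isoP].
have m3 : m = 3.
  apply/eqP; rewrite -(@eqn_exp2l 2) //.
  by rewrite -(card_quaternion m_gt2) -(card_isog isoP) oP.
subst m.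
have isoN : N \isog Zp_group n.
  rewrite (isog_cyclic_card _ (cycle_cyclic _)) card_Zp // oN eqxx andbT.
  change (cyclic (Zp n)); rewrite /Zp; case: (1 < n); last exact: cyclic1.
  by rewrite Zp_cycle cycle_cyclic.
apply: (isog_dprod defG (setX_dprod 'Q_8%G (Zp_group n))).
  exact: (isog_trans isoP (isog_setX1 _ 'Q_8%G)).
exact: (isog_trans isoN (isog_set1X _ _)).
Qed.

Lemma Q8_facts : exists x y : gsort 'Q_8,
  [/\ #[x] = 4, y \notin <[x]>,
      {in 'Q_8 :\: <[x]>, forall t, #[t] = 4} &
      forall u, #[u] = 2 -> u = x ^+ 2 ].
Proof.
have [[x y] genG [oy _ _]] := @generators_quaternion _ 'Q_8%G 3 isT (isog_refl _).
have [[_ o4 _] _ [_ _ Hu _ _] _ _] := quaternion_structure (n:=3) isT genG (isog_refl _).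
case: genG => _ _ ox /setDP[_ nxy].
exists x, y; split => // u ou; exact: (Hu u (in_setT u) ou).
Qed.

Lemma pair_expg (g1 g2 : finGroupType) (g : (g1 * g2)%type) k : (g ^+ k).1 = g.1 ^+ k.
Proof. by elim: k => // k IH; rewrite !expgS /= IH. Qed.

Lemma setXI_l (T1 T2 : finType) (A B : {set T1}) (C : {set T2}) :
  setX A C :&: setX B C = setX (A :&: B) C.
Proof.
apply/setP => -[a c]; rewrite !inE /=.
by case: (a \in A); case: (a \in B); case: (c \in C).
Qed.

Lemma H_side n : 0 < n -> odd n ->
  exists D : {set (gsort 'Q_8 * 'Z_n)%type},
  [/\ #|D| = (2 * n)%N,
   (forall h, h \in Q8xZ n -> h \notin D ->
     [/\ {in nb (Q8xZ n) h &, forall a b, cyc2 a b}, #|nb (Q8xZ n) h| = (4 * n)%N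
       & D \subset nb (Q8xZ n) h]) &
   (exists h1 h2, [/\ h1 \in Q8xZ n, h1 \notin D, h2 \in Q8xZ n, h2 \notin D
                   & nb (Q8xZ n) h1 :&: nb (Q8xZ n) h2 = D])].
Proof.
move=> n_gt0 odd_n.
have [x [y [ox nyx o4 uinv]]] := Q8_facts.
pose Z := <[x ^+ 2]>.
have oZ : #|Z| = 2 by rewrite /Z -orderE orderXdiv ox.
have sZx : Z \subset <[x]> by apply: cycleX.
have div4 : forall q : gsort 'Q_8, #[q] %| 4.
  move=> q; case: (boolP (q \in <[x]>)) => qx.
    by have := order_dvdG qx; rewrite -orderE ox.
  by rewrite o4 // inE qx in_setT.
have ord4 : forall q : gsort 'Q_8, q \notin Z -> #[q] = 4.
  move=> q qZ; have := div4 q; have := order_gt0 q.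
  case oq: #[q] => [|[|[|[|[|k]]]]] // _ _.
    by move/eqP: oq; rewrite order_eq1 => /eqP qe; rewrite qe group1 in qZ.
  by rewrite (uinv q oq) cycle_id in qZ.
have sZq : forall q : gsort 'Q_8, q \notin Z -> Z \subset <[q]>.
  move=> q qZ; have o2 : #[q ^+ 2] = 2 by rewrite orderXdiv ord4.
  by rewrite /Z cycle_subG -(uinv _ o2) mem_cycle.
have eqc : forall q c : gsort 'Q_8, q \notin Z -> q \in <[c]> -> <[c]> = <[q]>.
  move=> q c qZ qc; apply/eqP; rewrite eq_sym eqEcard cycle_subG qc /=.
  by rewrite -!orderE (ord4 q qZ) dvdn_leq ?div4.
have cyc_c : forall c : gsort 'Q_8, cyclic (setX <[c]> (Zp n)).
  move=> c; have dp := setX_dprod <[c]>%G (Zp_group n).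
  rewrite (cyclic_dprod dp).
  - rewrite -(card_isog (isog_setX1 _ _)) -(card_isog (isog_set1X _ _)) /=.
    rewrite -orderE; apply: coprime_dvdl (div4 c) _.
    by rewrite card_Zp // (_ : 4 = 2 ^ 2)%N // coprimeXl // coprime_sym coprimen2.
  - by rewrite -(isog_cyclic (isog_setX1 _ _)) cycle_cyclic.
  rewrite -(isog_cyclic (isog_set1X _ _)).
  change (cyclic (Zp n)); rewrite /Zp; case: (1 < n); last exact: cyclic1.
  by rewrite Zp_cycle cycle_cyclic.
have of_cyc2 : forall a b : (gsort 'Q_8 * 'Z_n)%type, cyc2 a b ->
    exists c, a.1 \in <[c]> /\ b.1 \in <[c]>.
  move=> a b /cyclicP[g defg]; exists g.1.
  have : a \in <[g]> by rewrite -defg mem_gen // !inE eqxx.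
  have : b \in <[g]> by rewrite -defg mem_gen // !inE eqxx orbT.
  by case/cycleP=> i -> /cycleP[j ->]; rewrite !pair_expg !mem_cycle.
have nbE : forall h, h \in Q8xZ n -> h.1 \notin Z -> nb (Q8xZ n) h = setX <[h.1]> (Zp n).
  move=> [q w] hH /= qZ; apply/setP => -[a b]; rewrite !inE /=.
  move: hH; rewrite /Q8xZ /= in_setX => /andP[_ wZ].
  apply/andP/andP => [[bZ /of_cyc2[c /= [qc ac]]] | [aq bZ]].
    by split => //; rewrite -(eqc q c qZ qc).
  split => //; apply: (cyc2_sub (cyc_c q)); by rewrite in_setX ?cycle_id ?aq ?wZ ?bZ.
pose D := setX Z (Zp n).
have notD : forall h, h \in Q8xZ n -> h \notin D -> h.1 \notin Z.
  move=> [q w]; rewrite /Q8xZ /= /D !in_setX /= => /andP[_ ->].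
  by rewrite andbT.
exists D; split.
- by rewrite cardsX oZ card_Zp.
- move=> h hH hD; have hZ := notD h hH hD.
  rewrite nbE //; split.
  + by move=> a b aS bS; apply: cyc2_sub (cyc_c h.1) aS bS.
  + by rewrite cardsX -orderE ord4 // card_Zp.
  + by apply: setXS; [apply: sZq | apply: subxx].
have xZ : x \notin Z.
  apply/negP => xZ; have := order_dvdG xZ; rewrite oZ ox.
  by [].
have yZ : y \notin Z by apply: contra nyx; apply/subsetP.
have one_n : (1 : 'Z_n) \in Zp n by apply: group1.
exists (x, 1), (y, 1).
have xH : (x, 1) \in Q8xZ n by rewrite /Q8xZ /= in_setX in_setT one_n.
have yH : (y, 1) \in Q8xZ n by rewrite /Q8xZ /= in_setX in_setT one_n.
have xD : (x, 1) \notin D by rewrite /D in_setX negb_and xZ.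
have yD : (y, 1) \notin D by rewrite /D in_setX negb_and yZ.
split => //.
rewrite !nbE //= setXI_l /D; congr (setX _ _).
apply/eqP; rewrite eqEsubset subsetI sZx (sZq y yZ) !andbT.
apply/subsetP => q /setIP[qx qy]; apply: contraR nyx => qZ.
by rewrite (eqc q x qZ qx) -(eqc q y qZ qy) cycle_id.
Qed.

Lemma cyc2_transfer (gT hT : finGroupType) (G : {set gT}) (f : gT -> hT) :
  {in G &, injective f} ->
  {in G &, forall x y, epg_adj (f x) (f y) = epg_adj x y} ->
  {in G &, forall a b, cyc2 (f a) (f b) = cyc2 a b}.
Proof.
move=> inj adj a b aG bG; case: (eqVneq a b) => [-> | ab]; first by rewrite !cyc2_refl.
have fab : f a != f b by rewrite (inj_in_eq inj).
by have := adj a b aG bG; rewrite /epg_adj ab fab.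
Qed.

Lemma card_preim (gT hT : finGroupType) (G : {set gT}) (H : {set hT}) (f : gT -> hT)
    (S : {set hT}) :
  {in G &, injective f} -> f @: G = H -> S \subset H ->
  #|[set a in G | f a \in S]| = #|S|.
Proof.
move=> inj fG sSH.
have inj' : {in [set a in G | f a \in S] &, injective f}.
  by apply: sub_in2 inj => a; rewrite inE => /andP[].
have E : f @: [set a in G | f a \in S] = S.
  apply/setP => h; apply/imsetP/idP => [[a] | hS].
    by rewrite inE => /andP[_ faS] ->.
  have : h \in f @: G by rewrite fG (subsetP sSH).
  by case/imsetP => a aG eh; exists a => //; rewrite inE aG -eh hS.
by rewrite -{2}E (card_in_imset inj').
Qed.

Unset Implicit Arguments.

Theorem theorem5 (n : nat) (gT : finGroupType) (G : {group gT}) :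
  0 < n -> odd n ->
  (epg_iso G (Q8xZ n) <-> G \isog Q8xZ n).
Proof.
move=> n_gt0 odd_n; split; last first.
  case/isogP => f injf fG; exists (fun x => f x); split.
  - by apply/injmP.
  - by rewrite -morphimEdom fG.
  move=> a b aG bG; rewrite /epg_adj (inj_in_eq (injmP injf)) //.
  congr (_ && _).
  have sab : [set a; b] \subset G by rewrite subUset !sub1set aG bG.
  have -> : [set f a; f b] = f @* [set a; b] by rewrite morphimEsub // imsetU1 imset_set1.
  by rewrite -morphim_gen // injm_cyclic // gen_subG.
case=> f [inj fG adj].
have tr := cyc2_transfer inj adj.
have [D' [oD' HD [h1 [h2 [h1H h1D h2H h2D defD']]]]] := H_side n_gt0 odd_n.
have nbH : forall h, nb (Q8xZ n) h \subset Q8xZ n.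
  by move=> h; apply/subsetP => a; rewrite inE => /andP[].
have sD'H : D' \subset Q8xZ n by rewrite -defD'; apply: subset_trans (subsetIl _ _) (nbH h1).
have fGH : forall a, a \in G -> f a \in Q8xZ n by move=> a aG; rewrite -fG imset_f.
have nbE : forall g, g \in G -> nb G g = [set a in G | f a \in nb (Q8xZ n) (f g)].
  move=> g gG; apply/setP => a; rewrite !inE.
  case aG: (a \in G) => //=; rewrite -tr //; have := fGH a aG; rewrite !inE /= => -> //.
apply: (@G_side _ G n [set a in G | f a \in D']) => //.
- rewrite -(card_in_imset inj) fG /Q8xZ /= cardsX card_Zp //.
  by rewrite (card_quaternion (n := 3)).
- by rewrite (card_preim inj fG sD'H).
- move=> g gG gD.
  have fgD : f g \notin D' by move: gD; rewrite inE gG.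
  have [cl cn sD] := HD (f g) (fGH g gG) fgD.
  rewrite nbE //; split.
  + move=> a b /setIdP[aG fa] /setIdP[bG fb].
    by rewrite -tr // cl.
  + by rewrite (card_preim inj fG (nbH _)).
  + apply/subsetP => a /setIdP[aG faD]; apply/setIdP; split => //.
    exact: (subsetP sD).
have : h1 \in f @: G by rewrite fG.
case/imsetP => g1 g1G e1.
have : h2 \in f @: G by rewrite fG.
case/imsetP => g2 g2G e2.
exists g1, g2; split => //.
- by rewrite inE g1G -e1.
- by rewrite inE g2G -e2.
rewrite !nbE // -e1 -e2; apply/setP => a; rewrite !inE -defD' !inE.
by case: (a \in G).
Qed.
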